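(* Fix $D_0>0$, $\alpha>0$, $p^a\ge0$, $\gamma\in(0,1)$. Let $d(p^s,p^c)=\max\{D_0-\alpha(p^s+p^c),0\}$. Consider the ex post regulation game in which the ISP chooses $p^s\in\mathbb{R}$ and the CP chooses $p^c\in\mathbb{R}$ simultaneously, with payoffs $$U_{ISP}(p^s,p^c)=\gamma\, d(p^s,p^c)\,(p^s+p^c+p^a),\qquad U_{CP}(p^s,p^c)=(1-\gamma)\, d(p^s,p^c)\,(p^s+p^c+p^a).$$ A profile $(p^s,p^c)$ is a pure-strategy Nash equilibrium if and only if $$p^s+p^c=\frac{D_0-\alpha p^a}{2\alpha}.$$ In particular: - the pure-strategy equilibrium exists and is unique up to a free choice of $p^s$ (equivalently of $p^c$), with the net internaut price uniquely determined; - at every equilibrium the demand equals $\frac{D_0+\alpha p^a}{2}>0$; - there is no equilibrium with zero demand; - at equilibrium the net revenue per unit demand $p^s+p^c+p^a=\frac{D_0+\alpha p^a}{2\alpha}$ is shared in proportions $\gamma$ and $1-\gamma$ by the ISP and the CP. This sharing is effected by the regulator's choice $p^d=\gamma(p^c+p^a)-(1-\gamma)p^s$.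
   Context: Single ISP, single CP model. - $p^s$ and $p^c$ are the prices per unit demand paid by internauts to the ISP and to the CP respectively. - $p^a\ge0$ is the CP's advertising revenue per unit demand. - $p^d$ is the payment per unit demand from the CP to the ISP. - The ISP's utility is $d\,(p^s+p^d)$ and the CP's utility is $d\,(p^c+p^a-p^d)$. In the ex post regulation game, the players first set $p^s$ and $p^c$. Afterwards a regulator sets $p^d$ to maximize $U_{ISP}^\gamma U_{CP}^{1-\gamma}$, which gives $p^d=\gamma(p^c+p^a)-(1-\gamma)p^s$. Hence the ISP receives $p^s+p^d=\gamma(p^s+p^c+p^a)$ and the CP receives $p^c+p^a-p^d=(1-\gamma)(p^s+p^c+p^a)$ per unit demand. This yields the payoffs stated in the claim. *)

(* Defs.v *)
From HB Require Import structures.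
From mathcomp Require Import all_boot all_order all_algebra.
Set Implicit Arguments. Unset Strict Implicit. Unset Printing Implicit Defensive.
Import Order.TTheory GRing.Theory Num.Theory.
Local Open Scope ring_scope.

Definition demand (R : realFieldType) (D0 alpha ps pc : R) : R :=
  Num.max (D0 - alpha * (ps + pc)) 0.

Definition reg_pd (R : realFieldType) (gamma pa ps pc : R) : R :=
  gamma * (pc + pa) - (1 - gamma) * ps.

Definition U_ISP (R : realFieldType) (D0 alpha pa gamma ps pc : R) : R :=
  gamma * demand D0 alpha ps pc * (ps + pc + pa).

Definition U_CP (R : realFieldType) (D0 alpha pa gamma ps pc : R) : R :=
  (1 - gamma) * demand D0 alpha ps pc * (ps + pc + pa).

Definition is_NE (R : realFieldType) (D0 alpha pa gamma ps pc : R) : Prop :=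
  (forall ps' : R, U_ISP D0 alpha pa gamma ps' pc <= U_ISP D0 alpha pa gamma ps pc)
  /\ (forall pc' : R, U_CP D0 alpha pa gamma ps pc' <= U_CP D0 alpha pa gamma ps pc).

(* Main.v *)
Require Import Defs.
From HB Require Import structures.
From mathcomp Require Import all_boot all_order all_algebra.
From mathcomp Require Import ring lra.
Import Order.TTheory GRing.Theory Num.Theory.
Set Implicit Arguments.
Local Open Scope ring_scope.

Definition F (R : realFieldType) (D0 alpha pa x : R) := Num.max (D0 - alpha * x) 0 * (x + pa).
Definition sst (R : realFieldType) (D0 alpha pa : R) := (D0 - alpha * pa) / (2 * alpha).
Definition M (R : realFieldType) (D0 alpha pa : R) := (D0 + alpha * pa) ^+ 2 / (4 * alpha).

Arguments F {R}. Arguments sst {R}. Arguments M {R}.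
Section Aux.
Variables (R : realFieldType).

Lemma alpha_neq0 {alpha : R} : 0 < alpha -> alpha != 0. Proof. by move=> h; rewrite gt_eqF. Qed.

Lemma key (D0 alpha pa : R) (halpha : 0 < alpha) (x : R) : F D0 alpha pa x + alpha * (x - sst D0 alpha pa) ^+ 2 = M D0 alpha pa + (Num.max (D0 - alpha * x) 0 - (D0 - alpha * x)) * (x + pa).
Proof.
rewrite /F /M /sst; have ha := alpha_neq0 halpha.
field; rewrite ?mulf_neq0 //.
Qed.

Lemma M_gt0 (D0 alpha pa : R) (hD0 : 0 < D0) (halpha : 0 < alpha) (hpa : 0 <= pa) : 0 < M D0 alpha pa.
Proof.
have hp : 0 < D0 + alpha * pa.
  move: (alpha * pa) (mulr_ge0 (ltW halpha) hpa) => q hq; lra.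
rewrite /M divr_gt0 //; last by rewrite mulr_gt0.
exact: exprn_gt0.
Qed.

Lemma F_le (D0 alpha pa : R) (hD0 : 0 < D0) (halpha : 0 < alpha) (hpa : 0 <= pa) (x : R) : F D0 alpha pa x <= M D0 alpha pa.
Proof.
case: (lerP 0 (D0 - alpha * x)) => h.
  have := key D0 alpha pa halpha x; rewrite max_l // subrr mul0r addr0 => <-.
  by rewrite lerDl; apply: mulr_ge0; [exact: ltW | exact: sqr_ge0].
rewrite /F max_r ?(ltW h) // mul0r; exact: ltW (M_gt0 D0 alpha pa hD0 halpha hpa).
Qed.

Lemma F_eq (D0 alpha pa : R) (hD0 : 0 < D0) (halpha : 0 < alpha) (hpa : 0 <= pa) (x : R) : M D0 alpha pa <= F D0 alpha pa x -> x = sst D0 alpha pa.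
Proof.
case: (lerP 0 (D0 - alpha * x)) => h.
  have := key D0 alpha pa halpha x; rewrite max_l // subrr mul0r addr0.
  move: (F D0 alpha pa x) (M D0 alpha pa) => f m H1 H2.
  have : alpha * (x - sst D0 alpha pa) ^+ 2 <= 0.
    move: (alpha * (x - sst D0 alpha pa) ^+ 2) H1 => z H1; lra.
  rewrite pmulr_rle0 // => H3.
  have : (x - sst D0 alpha pa) ^+ 2 == 0 by rewrite eq_le H3 sqr_ge0.
  by rewrite sqrf_eq0 subr_eq0 => /eqP.
rewrite /F max_r ?(ltW h) // mul0r => H; have := M_gt0 D0 alpha pa hD0 halpha hpa.
move: (M D0 alpha pa) H => m H H'; lra.
Qed.

Lemma F_sst (D0 alpha pa : R) (hD0 : 0 < D0) (halpha : 0 < alpha) (hpa : 0 <= pa) : F D0 alpha pa (sst D0 alpha pa) = M D0 alpha pa.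
Proof.
have := key D0 alpha pa halpha (sst D0 alpha pa); rewrite subrr expr0n /= mulr0 addr0 => ->.
suff -> : Num.max (D0 - alpha * sst D0 alpha pa) 0 = D0 - alpha * sst D0 alpha pa by rewrite subrr mul0r addr0.
apply: max_l.
have -> : D0 - alpha * sst D0 alpha pa = (D0 + alpha * pa) / 2.
  rewrite /sst; have ha := alpha_neq0 halpha; by field.
move: (alpha * pa) (mulr_ge0 (ltW halpha) hpa) => q hq; lra.
Qed.

End Aux.
Arguments alpha_neq0 {R alpha}. Arguments key {R}. Arguments M_gt0 {R}. Arguments F_le {R}. Arguments F_eq {R}. Arguments F_sst {R}.

Theorem theorem2 (R : realFieldType) (D0 alpha pa gamma : R)
    (hD0 : 0 < D0) (halpha : 0 < alpha) (hpa : 0 <= pa)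
    (hg0 : 0 < gamma) (hg1 : gamma < 1) :
  (* characterization *)
  (forall ps pc : R,
      is_NE D0 alpha pa gamma ps pc <->
      ps + pc = (D0 - alpha * pa) / (2 * alpha))
  (* existence, with free choice of ps (resp. pc) *)
  /\ (forall ps : R, exists pc : R, is_NE D0 alpha pa gamma ps pc)
  /\ (forall pc : R, exists ps : R, is_NE D0 alpha pa gamma ps pc)
  (* equilibrium demand, positive; hence no zero-demand equilibrium *)
  /\ (forall ps pc : R, is_NE D0 alpha pa gamma ps pc ->
        demand D0 alpha ps pc = (D0 + alpha * pa) / 2
        /\ 0 < demand D0 alpha ps pc)
  /\ (forall ps pc : R, is_NE D0 alpha pa gamma ps pc ->
        demand D0 alpha ps pc <> 0)
  (* revenue sharing at equilibrium, effected by the regulator's p^d *)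
  /\ (forall ps pc : R, is_NE D0 alpha pa gamma ps pc ->
        ps + pc + pa = (D0 + alpha * pa) / (2 * alpha)
        /\ ps + reg_pd gamma pa ps pc = gamma * (ps + pc + pa)
        /\ pc + pa - reg_pd gamma pa ps pc = (1 - gamma) * (ps + pc + pa)).
Proof.
have hI : forall ps pc, U_ISP D0 alpha pa gamma ps pc = gamma * F D0 alpha pa (ps + pc).
  by move=> ps pc; rewrite /U_ISP /F /demand mulrA.
have hC : forall ps pc, U_CP D0 alpha pa gamma ps pc = (1 - gamma) * F D0 alpha pa (ps + pc).
  by move=> ps pc; rewrite /U_CP /F /demand mulrA.
have hg1' : 0 < 1 - gamma by lra.
have char : forall ps pc, is_NE D0 alpha pa gamma ps pc <-> ps + pc = sst D0 alpha pa.
  move=> ps pc; split.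
    case=> H _; apply: (F_eq D0 alpha pa hD0 halpha hpa).
    have := H (sst D0 alpha pa - pc); rewrite !hI subrK F_sst //.
    by rewrite ler_pM2l.
  move=> E; split=> [ps'|pc']; rewrite ?hI ?hC E F_sst //.
    by rewrite ler_pM2l // F_le.
  by rewrite ler_pM2l // F_le.
have dem : forall ps pc, is_NE D0 alpha pa gamma ps pc ->
    demand D0 alpha ps pc = (D0 + alpha * pa) / 2.
  move=> ps pc /char E; rewrite /demand E /sst.
  have ha := alpha_neq0 halpha.
  have -> : D0 - alpha * ((D0 - alpha * pa) / (2 * alpha)) = (D0 + alpha * pa) / 2.
    by field.
  apply: max_l; move: (alpha * pa) (mulr_ge0 (ltW halpha) hpa) => q hq; lra.
have dpos : 0 < (D0 + alpha * pa) / 2 by move: (alpha * pa) (mulr_ge0 (ltW halpha) hpa) => q hq; lra.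
split; first exact: char.
split. move=> ps; exists (sst D0 alpha pa - ps); apply/char; ring.
split. move=> pc; exists (sst D0 alpha pa - pc); apply/char; ring.
split. by move=> ps pc H; rewrite dem.
split. by move=> ps pc H; rewrite dem // => E; move: dpos; rewrite E ltxx.
move=> ps pc /char E; rewrite /reg_pd; split; last by split; ring.
rewrite E /sst; have ha := alpha_neq0 halpha; by field.
Qed.
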